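(* Let $z\in\mathbb{E}^d$ and $x\in\mathbb{E}^d\setminus\mathbf{B}[z]$. Let $C$ be a circle of radius at least one and $\mu$ an arc of $C$ which is shorter than a quarter circle, with end points $x$ and $y$, oriented from $x$ toward $y$. Assume that the angle between the vector $x-z$ and the (oriented) tangent direction of $\mu$ at $x$ is at most a right angle. Then $y\notin\mathbf{B}[z]$.
   Context: $\mathbf{B}[z]$ denotes the closed unit ball centered at $z$. An arc is a connected subset of a circle containing no pair of antipodal points of the circle. *)

(* Defs.v *)
From HB Require Import structures.
From mathcomp Require Import all_boot all_order all_algebra.
From mathcomp Require Import all_classical all_reals all_analysis.
Set Implicit Arguments. Unset Strict Implicit. Unset Printing Implicit Defensive.
Import Order.TTheory GRing.Theory Num.Theory.
Local Open Scope ring_scope.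

Definition dotp (R : realType) (d : nat) (u v : 'rV[R]_d) : R :=
  \sum_(i < d) u ord0 i * v ord0 i.

Definition enorm (R : realType) (d : nat) (u : 'rV[R]_d) : R :=
  Num.sqrt (dotp u u).

Definition closed_unit_ball (R : realType) (d : nat) (z : 'rV[R]_d) :
  set 'rV[R]_d := [set x | enorm (x - z) <= 1].

(* Point of the circle with center c, radius r, in the plane spanned by the
   orthonormal pair (u, v), at angle t. *)
Definition circ_pt (R : realType) (d : nat) (c u v : 'rV[R]_d) (r t : R) :
  'rV[R]_d := c + (r * cos t) *: u + (r * sin t) *: v.

(* Main.v *)
Require Import Defs.
From HB Require Import structures.
From mathcomp Require Import all_boot all_order all_algebra.
From mathcomp Require Import all_classical all_reals all_analysis.
From mathcomp Require Import ring lra.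
Import Order.TTheory GRing.Theory Num.Theory.
Local Open Scope ring_scope.

Section Dot.
Variables (R : realType) (d : nat).
Implicit Types (a b w : 'rV[R]_d).
Lemma dotpDl a b w : dotp (a + b) w = dotp a w + dotp b w.
Proof. rewrite /dotp -big_split /=; apply: eq_bigr => i _; by rewrite !mxE mulrDl. Qed.
Lemma dotpZl k a w : dotp (k *: a) w = k * dotp a w.
Proof. rewrite /dotp mulr_sumr; apply: eq_bigr => i _; by rewrite !mxE mulrA. Qed.
Lemma dotpC a w : dotp a w = dotp w a.
Proof. rewrite /dotp; apply: eq_bigr => i _; by rewrite mulrC. Qed.
Lemma dotpDr a b w : dotp w (a + b) = dotp w a + dotp w b.
Proof. by rewrite dotpC dotpDl !(dotpC w). Qed.
Lemma dotpZr k a w : dotp w (k *: a) = k * dotp w a.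
Proof. by rewrite dotpC dotpZl dotpC. Qed.
Lemma dotpp_ge0 a : 0 <= dotp a a.
Proof. apply: sumr_ge0 => i _; by rewrite -expr2 sqr_ge0. Qed.
End Dot.

Theorem lemma1 (R : realType) (d : nat) (z x y c u v : 'rV[R]_d)
    (r theta : R) :
  ~ closed_unit_ball z x ->
  1 <= r ->
  dotp u u = 1 -> dotp v v = 1 -> dotp u v = 0 ->
  0 < theta -> theta < pi / 2 ->
  x = circ_pt c u v r 0 -> y = circ_pt c u v r theta ->
  0 <= dotp (x - z) v ->
  ~ closed_unit_ball z y.
Proof.
move=> nx r1 uu vv uv t0 tpi hx hy wv; subst x y.
rewrite /closed_unit_ball /enorm /= in nx *.
rewrite -sqrtr1 ler_sqrt // in nx *.
have Ex a : circ_pt c u v r a - z = (c - z) + (r * cos a) *: u + (r * sin a) *: v.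
  by rewrite /circ_pt addrAC (addrAC c).
rewrite !Ex in nx wv *.
move: (c - z) nx wv => P nx wv.
rewrite cos0 sin0 mulr0 scale0r addr0 mulr1 in nx wv.
have vu : dotp v u = 0 by rewrite dotpC.
have PP := @dotpp_ge0 _ _ P.
have Pu' : dotp u P = dotp P u by rewrite dotpC.
have Pv' : dotp v P = dotp P v by rewrite dotpC.
rewrite !(dotpDl, dotpDr, dotpZl, dotpZr) uu vv uv vu Pu' Pv' in nx wv *.
have cp : 0 < cos theta by apply: cos_gt0_pihalf; apply/andP; split => //; lra.
have sp : 0 < sin theta by apply: sin_gt0_pihalf; apply/andP; split.
have c1 := cos_le1 theta.
have cs := cos2Dsin2 theta.
move: nx wv PP. set Pu := dotp P u. set Pv := dotp P v. set Q := dotp P P.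
move=> nx wv PP.
rewrite !(mulr0, mulr1, addr0) in nx wv *.
apply/negP; rewrite ?ler_sqrt // -ltNge.
have {}nx : 1 < Q + r * Pu + (r * Pu + r * r) by rewrite ltNge; apply/negP.

set C := cos theta in cp c1 cs *. set S := sin theta in sp cs *.
have r0 : 0 < r by lra.
have hv : 0 <= Pv by lra.
have hrS : 0 <= r * S * Pv by apply: mulr_ge0; [apply: mulr_ge0|]; lra.
have e : r * C * (r * C) + r * S * (r * S) = r * r.
  by rewrite -[r * r]mulr1 -cs; ring.
have -> : Q + r * C * Pu + r * S * Pv + (r * C * Pu + r * C * (r * C)) +
  (r * S * Pv + r * S * (r * S)) = Q + (r * C * Pu) * 2 + (r * S * Pv) * 2 + r * r.
  by rewrite -e; ring.
case: (lerP Pu 0) => hu.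
- have h : 0 <= r * (1 - C) * (- Pu).
    by apply: mulr_ge0; [apply: mulr_ge0|]; lra.
  have E : r * (1 - C) * (- Pu) = r * C * Pu - r * Pu by ring.
  rewrite E in h.
  lra.
- have : 0 < r * C * Pu by apply: mulr_gt0 => //; apply: mulr_gt0.
  have : 1 * 1 <= r * r by apply: ler_pM => //; lra.
  rewrite mul1r.
  lra.
Qed.
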